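(* Let $\mathcal{R}=(\mathcal{S},R_1,\ldots,R_k)$ be a relational structure (all arities $n_i\ge2$) with a relational message passing model as in the context satisfying the Bounded Jacobians assumption, and let $\mathcal{G}=\mathcal{G}(\mathcal{S},\mathbf{B})$ be its influence graph for the augmented influence matrix $\mathbf{B}$. Then for all $\sigma,\tau\in\mathcal{S}$ such that $(\tau\to\sigma)$ is an edge of $\mathcal{G}$, $$\left\Vert \frac{\partial \mathbf{h}_{\sigma}^{(2)}}{\partial \mathbf{h}^{(0)}_{\tau}} \right\Vert_{1} \leq \frac{1}{3} \left( \prod_{\ell=0}^{1} \alpha^{(\ell)} \beta^{(\ell)} \right) \left[ \mathrm{EFC}_\mathcal{G}(\tau, \sigma) + w_{\tau}^{\mathrm{out}} + w_{\sigma}^{\mathrm{in}} - 4 \right].$$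
   Context: A relational structure $\mathcal{R}=(\mathcal{S},R_1,\ldots,R_k)$ consists of a finite set $\mathcal{S}$ of entities and relations $R_i\subseteq\mathcal{S}^{n_i}$ of arity $n_i$; throughout, $n_i\ge 2$ for all $i$. A relational message passing model on $\mathcal{R}$ consists of: feature vectors $\mathbf{h}_\sigma^{(t)}\in\mathbb{R}^{p_t}$ for $\sigma\in\mathcal{S}$, $t\ge 0$, with $\mathbf{h}_\sigma^{(0)}=\mathbf{x}_\sigma$ the input features (all later features are regarded as functions of the input features); message functions $\boldsymbol{\psi}_i^{(t)}:(\mathbb{R}^{p_t})^{n_i}\to\mathbb{R}^{p_{i,t}}$; update functions $\boldsymbol{\phi}^{(t)}:\mathbb{R}^{p_{1,t}}\times\cdots\times\mathbb{R}^{p_{k,t}}\to\mathbb{R}^{p_{t+1}}$; and shift operators $\mathbf{A}^{R_i}\in\mathbb{R}_{\ge 0}^{\mathcal{S}^{n_i}}$ with $\mathbf{A}^{R_i}_{\zeta_1,\ldots,\zeta_{n_i}}=0$ whenever $(\zeta_1,\ldots,\zeta_{n_i})\notin R_i$. The update rule is $\mathbf{h}_\sigma^{(t+1)}=\boldsymbol{\phi}^{(t)}(\mathbf{m}_{\sigma,1}^{(t)},\ldots,\mathbf{m}_{\sigma,k}^{(t)})$ with $\mathbf{m}_{\sigma,i}^{(t)}=\sum_{\boldsymbol{\xi}\in\mathcal{S}^{n_i-1}}\mathbf{A}^{R_i}_{\sigma,\boldsymbol{\xi}}\,\boldsymbol{\psi}_i^{(t)}(\mathbf{h}_\sigma^{(t)},\mathbf{h}_{\xi_1}^{(t)},\ldots,\mathbf{h}_{\xi_{n_i-1}}^{(t)})$.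 Aggregated influence matrix: $\tilde{\mathbf{A}}^{R_i}_{\sigma,\tau}=\sum_{j=1}^{n_i-1}\sum_{\boldsymbol{\xi}\in\mathcal{S}^{n_i-2}}\mathbf{A}^{R_i}_{\sigma,\xi_1,\ldots,\xi_{j-1},\tau,\xi_j,\ldots,\xi_{n_i-2}}$, $\tilde{\mathbf{A}}=\sum_{i=1}^k\tilde{\mathbf{A}}^{R_i}$; $\gamma=\max_{\sigma}\sum_{\tau}\tilde{\mathbf{A}}_{\sigma,\tau}$; augmented influence matrix $\mathbf{B}=\gamma\mathbf{I}+\tilde{\mathbf{A}}$. Influence graph: for $\mathbf{Q}\in\{\tilde{\mathbf{A}},\mathbf{B}\}$, $\mathcal{G}(\mathcal{S},\mathbf{Q})$ is the weighted directed graph on node set $\mathcal{S}$ with a directed edge $\tau\to\sigma$ (self-loops allowed) for each $(\sigma,\tau)$ with $\mathbf{Q}_{\sigma,\tau}>0$, of weight $w_{\tau\to\sigma}=\mathbf{Q}_{\sigma,\tau}$; set $w_{\tau\to\sigma}=0$ if there is no such edge. Extended Forman curvature: in a weighted directed graph with weights $w$, $w_\tau^{\mathrm{out}}=\sum_{\sigma}w_{\tau\to\sigma}$, $w_\sigma^{\mathrm{in}}=\sum_{\tau}w_{\tau\to\sigma}$; for an edge $\tau\to\sigma$, $w_T=\sum_{\xi\in\mathcal{S}}w_{\tau\to\xi}w_{\xi\to\sigma}$, $w_F=\sum_{\xi_1,\xi_2\in\mathcal{S}}w_{\tau\to\xi_1}w_{\xi_1\to\xi_2}w_{\xi_2\to\sigma}$,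 and $\mathrm{EFC}_{\mathcal{G}}(\tau,\sigma)=4-w_\tau^{\mathrm{out}}-w_\sigma^{\mathrm{in}}+3w_T+2w_F$. Bounded Jacobians assumption: every $\boldsymbol{\psi}_i^{(\ell)}$ and $\boldsymbol{\phi}^{(\ell)}$ is differentiable, the Jacobian of $\boldsymbol{\psi}_i^{(\ell)}$ with respect to any one of its vector arguments has induced $1$-norm at most $\beta_i^{(\ell)}$ everywhere, and the Jacobian of $\boldsymbol{\phi}^{(\ell)}$ with respect to any one message argument has induced $1$-norm at most $\alpha^{(\ell)}$ everywhere; $\beta^{(\ell)}=\max_i\beta_i^{(\ell)}$. $\|\cdot\|_1$ is the induced matrix $1$-norm (maximum absolute column sum). *)

(* Defs.v *)
From HB Require Import structures.
From mathcomp Require Import all_boot all_order all_algebra.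
From mathcomp Require Import all_classical all_reals all_analysis.
Set Implicit Arguments. Unset Strict Implicit. Unset Printing Implicit Defensive.
Import Order.TTheory GRing.Theory Num.Theory.
Import numFieldNormedType.Exports.
Local Open Scope ring_scope.

Section RMP.
Variable R : realType.

(* Jacobian in the standard orientation (rows = output coordinates,
   columns = input coordinates): transpose of MathComp-Analysis' 'J. *)
Definition jac (m n : nat) (f : 'rV[R]_m -> 'rV[R]_n) (p : 'rV[R]_m)
  : 'M[R]_(n, m) := ('J f p)^T.

Definition norm1 (m n : nat) (M : 'M[R]_(m, n)) : R :=
  \big[Num.max/0]_(j < n) \sum_(i < m) `|M i j|.

Variables (S : finType) (k : nat) (n : 'I_k -> nat).

Definition first_is (i : 'I_k) (z : {ffun 'I_(n i) -> S}) (s : S) : bool :=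
  [forall j : 'I_(n i), (nat_of_ord j == 0%N) ==> (z j == s)].

Definition args (d : nat) (i : 'I_k) (h : S -> 'rV[R]_d)
  (z : {ffun 'I_(n i) -> S}) : 'M[R]_(n i, d) :=
  \matrix_(a < n i, b < d) h (z a) 0 b.

(* Model data: feature dims p t, message dims q t i, message functions
   psi t i, update functions phi t (taking the k messages as one block row
   [m_1 | ... | m_k]), shift operators A i. *)
Variables (A : forall i : 'I_k, {ffun 'I_(n i) -> S} -> R)
  (p : nat -> nat) (q : nat -> 'I_k -> nat)
  (psi : forall (t : nat) (i : 'I_k), 'M[R]_(n i, p t) -> 'rV[R]_(q t i))
  (phi : forall t : nat, 'rV[R]_(\sum_(i < k) q t i) -> 'rV[R]_(p t.+1)).

Definition message (t : nat) (h : S -> 'rV[R]_(p t)) (s : S) (i : 'I_k)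
  : 'rV[R]_(q t i) :=
  \sum_(z : {ffun 'I_(n i) -> S} | first_is z s) @A i z *: @psi t i (args h z).

(* h^{(t)} as a function of the input features x *)
Fixpoint feat (t : nat) : (S -> 'rV[R]_(p 0)) -> S -> 'rV[R]_(p t) :=
  match t return (S -> 'rV[R]_(p 0)) -> S -> 'rV[R]_(p t) with
  | 0 => fun x => x
  | t'.+1 => fun x s => @phi t' (\mxrow_(i < k) message (feat t' x) s i)
  end.

End RMP.

Section Influence.
Variables (R : realType) (S : finType) (k : nat) (n : 'I_k -> nat)
  (A : forall i : 'I_k, {ffun 'I_(n i) -> S} -> R).

Definition Atilde (s u : S) : R :=
  \sum_(i < k) \sum_(j < n i | (0 < j)%N)
     \sum_(z : {ffun 'I_(n i) -> S} | first_is z s && (z j == u)) A z.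

Definition gamma : R := \big[Num.max/0]_(s : S) \sum_(u : S) Atilde s u.

Definition Bmat (s u : S) : R := (s == u)%:R * gamma + Atilde s u.

End Influence.

Section Forman.
Variables (R : realType) (S : finType).

Definition is_edge (Q : S -> S -> R) (u s : S) : bool := 0 < Q s u.
Definition weight (Q : S -> S -> R) (u s : S) : R :=
  if 0 < Q s u then Q s u else 0.

Variable w : S -> S -> R.   (* w u s = w_{u -> s} *)
Definition w_out (u : S) : R := \sum_(s : S) w u s.
Definition w_in (s : S) : R := \sum_(u : S) w u s.
Definition w_T (u s : S) : R := \sum_(x : S) w u x * w x s.
Definition w_F (u s : S) : R := \sum_(x1 : S) \sum_(x2 : S) w u x1 * w x1 x2 * w x2 s.
Definition EFC (u s : S) : R := 4 - w_out u - w_in s + 3 * w_T u s + 2 * w_F u s.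

End Forman.

(* Main.v *)
Require Import Defs.
From HB Require Import structures.
From mathcomp Require Import all_boot all_order all_algebra.
From mathcomp Require Import all_classical all_reals all_analysis.
From mathcomp Require Import ring.
Import Order.TTheory GRing.Theory Num.Theory.
Import numFieldNormedType.Exports.
Local Open Scope ring_scope.

Section H.
Variable R : realType.
Set Implicit Arguments. Unset Strict Implicit. Unset Printing Implicit Defensive.

Lemma cont_sum (T : topologicalType) (V : normedModType R) (I : Type) (r : seq I) (P : pred I)
  (g : I -> T -> V) x :
  (forall i, {for x, continuous (g i)}) ->
  {for x, continuous (fun y => \sum_(i <- r | P i) g i y)}.
Proof.
move=> hg; elim: r => [|a r IH].
  have -> : (fun y => \sum_(i <- [::] | P i) g i y) = fun _ => 0.
    by apply: funext => y; rewrite big_nil.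
  exact: cvg_cst.
have -> : (fun y => \sum_(i <- a :: r | P i) g i y) =
  fun y => (if P a then g a y else 0) + \sum_(i <- r | P i) g i y.
  by apply: funext => y; rewrite big_cons; case: (P a); rewrite ?add0r.
case: (P a).
  exact: (continuousD (hg a) IH).
apply: (continuousD _ IH); exact: cvg_cst.
Qed.

Lemma lin_cont a b c d (f : 'M[R]_(a,b) -> 'M[R]_(c,d)) : linear f -> continuous f.
Proof.
move=> hf.
pose fL : {linear _ -> _} := HB.pack f (GRing.isLinear.Build _ _ _ _ f hf).
have E : f = fun M => \sum_(i < a) \sum_(j < b) M i j *: f (delta_mx i j).
  apply: funext => M; rewrite {1}(matrix_sum_delta M).
  rewrite -[f _]/(fL _) linear_sum; apply: eq_bigr => i _.
  rewrite linear_sum; apply: eq_bigr => j _; by rewrite linearZ.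
rewrite E => x.
apply: cont_sum => i; apply: cont_sum => j.
apply: continuousZr_tmp; exact: coord_continuous.
Qed.

Lemma dlin a b c d (f : 'M[R]_(a,b) -> 'M[R]_(c,d)) x : linear f ->
  differentiable f x /\ 'd f x = f :> (_ -> _).
Proof.
move=> hf.
pose fL : {linear _ -> _} := HB.pack f (GRing.isLinear.Build _ _ _ _ f hf).
have cf : continuous fL := lin_cont hf.
split; [exact: (linear_differentiable x cf) | exact: (diff_lin x cf)].
Qed.


Lemma dsum (V W : normedModType R) (I : Type) (r : seq I) (P : pred I)
  (F : I -> V -> W) x :
  (forall i, differentiable (F i) x) ->
  differentiable (fun u => \sum_(i <- r | P i) F i u) x /\
  forall v, 'd (fun u => \sum_(i <- r | P i) F i u) x v = \sum_(i <- r | P i) 'd (F i) x v.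
Proof.
move=> hF.
have E : (fun u => \sum_(i <- r | P i) F i u) = \sum_(i <- r | P i) F i.
  by rewrite fct_sumE.
rewrite E; clear E; elim: r => [|a r [IH1 IH2]].
  rewrite !big_nil; have -> : (0 : V -> W) = cst (0:W) by [].
  split; first exact: differentiable_cst.
  by move=> v; rewrite diff_cst big_nil.
have E2 : forall v, \sum_(i <- a :: r | P i) 'd (F i) x v =
   (if P a then 'd (F a) x v else 0) + \sum_(i <- r | P i) 'd (F i) x v.
  by move=> v; rewrite big_cons; case: (P a); rewrite ?add0r.
rewrite big_cons; case: (P a) E2 => E2; last first.
  by split => // v; rewrite E2 add0r IH2.
have -> : (F a + \sum_(j <- r | P j) F j) = (fun u => F a u + (\sum_(j <- r | P j) F j) u) by [].
split; first exact: differentiableD.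
move=> v; rewrite diffD; [|exact: hF|exact: IH1].
rewrite E2.
rewrite -IH2.
by [].
Qed.

Lemma dlinc a b c d (L : 'M[R]_(a,b) -> 'M[R]_(c,d)) (V : normedModType R)
  (G : V -> 'M[R]_(a,b)) x :
  linear L -> differentiable G x ->
  differentiable (fun u => L (G u)) x /\ forall v, 'd (fun u => L (G u)) x v = L ('d G x v).
Proof.
move=> hL hG; have [dL eL] := dlin (G x) hL.
have -> : (fun u => L (G u)) = L \o G by [].
split; first exact: differentiable_comp.
by move=> v; rewrite diff_comp //= eL.
Qed.

Lemma ddecomp a b (N : nat) (V : normedModType R) (G : V -> 'M[R]_(a,b))
  (c d : 'I_N -> nat * nat)
  (P : forall i, 'M[R]_(a,b) -> 'M[R]_((c i).1, (c i).2))
  (E : forall i, 'M[R]_((c i).1, (c i).2) -> 'M[R]_(a,b)) x :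
  (forall i, linear (E i)) ->
  (forall w, \sum_(i < N) E i (P i w) = w) ->
  (forall i, differentiable (fun u => P i (G u)) x) ->
  differentiable G x.
Proof.
move=> hE hS hd.
have -> : G = fun u => \sum_(i < N) E i (P i (G u)).
  by apply: funext => u; rewrite hS.
apply: (dsum _ _ _).1 => i.
exact: (dlinc (hE i) (hd i)).1.
Qed.

Definition L1 a b (M : 'M[R]_(a,b)) : R := \sum_i \sum_j `|M i j|.

Lemma L1_ge0 a b (M : 'M[R]_(a,b)) : 0 <= L1 M.
Proof. by apply: sumr_ge0 => i _; apply: sumr_ge0. Qed.

Lemma L1D a b (M N : 'M[R]_(a,b)) : L1 (M + N) <= L1 M + L1 N.
Proof.
rewrite /L1 -big_split ler_sum // => i _; rewrite -big_split ler_sum // => j _.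
by rewrite mxE ler_normD.
Qed.

Lemma L1Z a b (k : R) (M : 'M[R]_(a,b)) : L1 (k *: M) = `|k| * L1 M.
Proof.
rewrite /L1 mulr_sumr; apply: eq_bigr => i _; rewrite mulr_sumr.
by apply: eq_bigr => j _; rewrite mxE normrM.
Qed.

Lemma L1_sum a b (I : Type) (r : seq I) (P : pred I) (F : I -> 'M[R]_(a,b)) :
  L1 (\sum_(i <- r | P i) F i) <= \sum_(i <- r | P i) L1 (F i).
Proof.
elim: r => [|x r IH]; first by rewrite !big_nil /L1 big1 // => i _; rewrite big1 // => j _; rewrite mxE normr0.
rewrite !big_cons; case: (P x) => //.
by apply: le_trans (L1D _ _) _; rewrite lerD2l.
Qed.

Lemma norm1_ge0 m n (M : 'M[R]_(m,n)) : 0 <= norm1 M.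
Proof. by apply: bigmax_ge_id. Qed.

Lemma L1_rows a b (M : 'M[R]_(a,b)) : L1 M = \sum_i L1 (row i M).
Proof.
rewrite /L1; apply: eq_bigr => i _; rewrite big_ord1.
by apply: eq_bigr => j _; rewrite mxE.
Qed.

Lemma L1_delta m (j : 'I_m) : L1 (delta_mx 0 j : 'rV[R]_m) = 1.
Proof.
rewrite /L1 big_ord1 (bigD1 j) //= big1 => [|i /negbTE nij]; rewrite mxE.
  by rewrite !eqxx normr1 addr0.
by rewrite nij andbF normr0.
Qed.

Lemma jacE m n (f : 'rV[R]_m -> 'rV[R]_n) p i j :
  jac f p i j = 'd f p (delta_mx 0 j) 0 i.
Proof. by rewrite /jac /jacobian !mxE. Qed.

Lemma norm1_jac m n (f : 'rV[R]_m -> 'rV[R]_n) p j :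
  L1 ('d f p (delta_mx 0 j)) <= norm1 (jac f p).
Proof.
rewrite /norm1 /L1 big_ord1.
apply: le_trans (le_bigmax _ _ j).
by rewrite le_eqVlt; apply/orP; left; apply/eqP; apply: eq_bigr => i _; rewrite jacE.
Qed.

Lemma jac_bnd m n (f : 'rV[R]_m -> 'rV[R]_n) p w :
  L1 ('d f p w) <= norm1 (jac f p) * L1 w.
Proof.
have Ew : w = \sum_(j < m) w 0 j *: delta_mx 0 j.
  by rewrite {1}(matrix_sum_delta w) big_ord1.
rewrite {1}Ew linear_sum.
apply: le_trans (L1_sum _ _ _) _.
have -> : L1 w = \sum_j `|w 0 j| by rewrite /L1 big_ord1.
rewrite mulr_sumr ler_sum // => j _.
rewrite linearZ L1Z mulrC ler_wpM2r //.
exact: norm1_jac.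
Qed.

Lemma norm1_le m n (f : 'rV[R]_m -> 'rV[R]_n) p C : 0 <= C ->
  (forall v, L1 ('d f p v) <= C * L1 v) -> norm1 (jac f p) <= C.
Proof.
move=> C0 h; apply: bigmax_le => // j _.
have := h (delta_mx 0 j); rewrite L1_delta mulr1 /L1 big_ord1.
by apply: le_trans; rewrite le_eqVlt; apply/orP; left; apply/eqP; apply: eq_bigr => i _; rewrite jacE.
Qed.


Lemma daffA a b c d (L : 'M[R]_(a,b) -> 'M[R]_(c,d)) (C : 'M[R]_(c,d)) :
  linear L -> (fun u => C + L u) = cst C + L.
Proof. move=> hL. by apply: funext. Time Qed.

Lemma daffB a b c d (L : 'M[R]_(a,b) -> 'M[R]_(c,d)) (C : 'M[R]_(c,d)) y :
  linear L -> differentiable (cst C + L) y.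
Proof.
move=> hL; have [dL eL] := dlin y hL.
exact: differentiableD (differentiable_cst _ _) dL. Time Qed.

Lemma daffC a b c d (L : 'M[R]_(a,b) -> 'M[R]_(c,d)) (C : 'M[R]_(c,d)) y :
  linear L -> 'd (cst C + L) y = L :> (_ -> _).
Proof.
move=> hL; have [dL eL] := dlin y hL.
rewrite diffD; [|exact: differentiable_cst|exact: dL].
apply: funext => u /=.
have h1 := diff_cst C y.
have h2 : 'd (cst C) y u = 0 by rewrite h1.
have h3 : 'd L y u = L u by rewrite eL.
exact: (etrans (congr2 +%R h2 h3) (add0r _)). Time Qed.

Lemma daff a b c d (L : 'M[R]_(a,b) -> 'M[R]_(c,d)) (C : 'M[R]_(c,d)) y :
  linear L -> differentiable (fun u => C + L u) y /\
  'd (fun u => C + L u) y = L :> (_ -> _).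
Proof. move=> hL; rewrite (daffA C hL); split; [exact: daffB|exact: daffC]. Qed.

Definition rowE N d (j : 'I_N) (u : 'rV[R]_d) : 'M[R]_(N,d) :=
  \matrix_(a, b) if a == j then u 0 b else 0.
Definition rowZ N d (j : 'I_N) (X : 'M[R]_(N,d)) : 'M[R]_(N,d) :=
  \matrix_(a, b) if a == j then 0 else X a b.

Lemma rowE_lin N d (j : 'I_N) : linear (@rowE N d j).
Proof.
move=> s u v; apply/matrixP => a b; rewrite !mxE.
by case: (a == j); rewrite ?mulr0 ?addr0.
Qed.

Lemma rowER N d (j : 'I_N) (X : 'M[R]_(N,d)) :
  (fun u : 'rV[R]_d => \matrix_(a, b) if a == j then u 0 b else X a b)
   = fun u => rowZ j X + rowE j u.
Proof.
apply: funext => u; apply/matrixP => a b; rewrite !mxE.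
by case: (a == j); rewrite ?add0r ?addr0.
Qed.

Lemma rowEX N d (j : 'I_N) (X : 'M[R]_(N,d)) : rowZ j X + rowE j (row j X) = X.
Proof.
apply/matrixP => a b; rewrite !mxE.
by case: eqP => [->|_]; rewrite ?add0r ?addr0 // mxE.
Qed.


Lemma psi_bound N d q (psi : 'M[R]_(N,d) -> 'rV[R]_q) (X : 'M[R]_(N,d)) (bet : R) :
  (forall Y, differentiable psi Y) ->
  (forall j : 'I_N, norm1 (jac (fun u : 'rV[R]_d =>
        psi (\matrix_(a, b) if a == j then u 0 b else X a b)) (row j X)) <= bet) ->
  forall V, L1 ('d psi X V) <= bet * L1 V.
Proof.
move=> dpsi hb V.
have key : forall j w, 'd (fun u : 'rV[R]_d =>
        psi (\matrix_(a, b) if a == j then u 0 b else X a b)) (row j X) w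
     = 'd psi X (rowE j w).
  move=> j w.
  have [dA eA] := daff (rowZ j X) (row j X) (@rowE_lin N d j).
  have -> : (fun u : 'rV[R]_d => psi (\matrix_(a, b) if a == j then u 0 b else X a b))
    = psi \o (fun u => rowZ j X + rowE j u) by rewrite -rowER.
  rewrite diff_comp; [|exact: dA|exact: dpsi].
  by rewrite /comp eA rowEX.
have EV : V = \sum_(j < N) rowE j (row j V).
  apply/matrixP => a b; rewrite summxE (bigD1 a) //= big1 => [|j /negbTE nj].
    by rewrite !mxE eqxx addr0.
  by rewrite mxE eq_sym nj.
rewrite {1}EV linear_sum; apply: le_trans (L1_sum _ _ _) _.
have -> : L1 V = \sum_(j < N) L1 (row j V).
  rewrite /L1; apply: eq_bigr => j _; rewrite big_ord1.
  by apply: eq_bigr => b _; rewrite mxE.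
rewrite mulr_sumr ler_sum // => j _.
rewrite -key; apply: le_trans (jac_bnd _ _ _) _.
by rewrite ler_wpM2r ?L1_ge0 ?hb.
Qed.


Section Blk.
Variables (k : nat) (q : 'I_k -> nat).

Lemma submxrowZ' m (s : R) (B : 'M[R]_(m, \sum_(i < k) q i)) j :
  submxrow (s *: B) j = s *: submxrow B j.
Proof. by apply/matrixP => x y; rewrite !mxE. Qed.

Definition blkE (i : 'I_k) (u : 'rV[R]_(q i)) : 'rV[R]_(\sum_(i < k) q i) :=
  \mxrow_(j < k) @dfwith _ (fun j0 : 'I_k => 'rV[R]_(q j0)) (fun j0 => 0) i u j.
Definition blkZ (m : 'rV[R]_(\sum_(i < k) q i)) (i : 'I_k) : 'rV[R]_(\sum_(i < k) q i) :=
  \mxrow_(j < k) @dfwith _ (fun j0 : 'I_k => 'rV[R]_(q j0)) (fun j0 => submxrow m j0) i 0 j.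

Lemma mxdf_in (f : forall j, 'rV[R]_(q j)) i (x : 'rV[R]_(q i)) :
  submxrow (\mxrow_(j < k) @dfwith _ (fun j0 : 'I_k => 'rV[R]_(q j0)) f i x j) i = x.
Proof. by rewrite mxrowK dfwithin. Qed.

Lemma mxdf_out (f : forall j, 'rV[R]_(q j)) i (x : 'rV[R]_(q i)) j : i != j ->
  submxrow (\mxrow_(j < k) @dfwith _ (fun j0 : 'I_k => 'rV[R]_(q j0)) f i x j) j = f j.
Proof. by move=> nij; rewrite mxrowK dfwithout. Qed.

Lemma blkE_lin i : linear (@blkE i).
Proof.
move=> s u v; apply/mxrowP => j; rewrite submxrowD submxrowZ'.
case: (eqVneq i j) => [<-|nij]; first by rewrite /blkE !mxdf_in.
by rewrite /blkE !mxdf_out // scaler0 addr0.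
Qed.

Lemma blkER (m : 'rV[R]_(\sum_(i < k) q i)) i :
  (fun u => \mxrow_(j < k) @dfwith _ (fun j0 : 'I_k => 'rV[R]_(q j0)) (fun j0 => submxrow m j0) i u j)
  = fun u => blkZ m i + @blkE i u.
Proof.
apply: funext => u; apply/mxrowP => j; rewrite submxrowD.
case: (eqVneq i j) => [<-|nij]; first by rewrite /blkE /blkZ !mxdf_in add0r.
by rewrite /blkE /blkZ !mxdf_out // addr0.
Qed.

Lemma blkEX (m : 'rV[R]_(\sum_(i < k) q i)) i : blkZ m i + @blkE i (submxrow m i) = m.
Proof.
apply/mxrowP => j; rewrite submxrowD.
case: (eqVneq i j) => [<-|nij]; first by rewrite /blkE /blkZ !mxdf_in add0r.
by rewrite /blkE /blkZ !mxdf_out // addr0.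
Qed.

Lemma blk_sum (w : 'rV[R]_(\sum_(i < k) q i)) : w = \sum_(i < k) @blkE i (submxrow w i).
Proof.
apply/mxrowP => j; rewrite submxrow_sum (bigD1 j) //= big1 => [|i nij].
  by rewrite /blkE mxdf_in addr0.
by rewrite /blkE mxdf_out.
Qed.

Lemma phi_bound p' (phi : 'rV[R]_(\sum_(i < k) q i) -> 'rV[R]_p') m (alp : R) :
  (forall Y, differentiable phi Y) ->
  (forall i : 'I_k, norm1 (jac (fun u : 'rV[R]_(q i) =>
     phi (\mxrow_(j < k) @dfwith _ (fun j0 : 'I_k => 'rV[R]_(q j0)) (fun j0 => submxrow m j0) i u j))
     (submxrow m i)) <= alp) ->
  forall w, L1 ('d phi m w) <= alp * \sum_(i < k) L1 (submxrow w i).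
Proof.
move=> dphi hb w.
have key : forall i v, 'd (fun u : 'rV[R]_(q i) =>
     phi (\mxrow_(j < k) @dfwith _ (fun j0 : 'I_k => 'rV[R]_(q j0)) (fun j0 => submxrow m j0) i u j))
     (submxrow m i) v = 'd phi m (@blkE i v).
  move=> i v.
  have [dA eA] := daff (blkZ m i) (submxrow m i) (@blkE_lin i).
  have -> : (fun u : 'rV[R]_(q i) =>
     phi (\mxrow_(j < k) @dfwith _ (fun j0 : 'I_k => 'rV[R]_(q j0)) (fun j0 => submxrow m j0) i u j))
    = phi \o (fun u => blkZ m i + @blkE i u) by rewrite -blkER.
  rewrite diff_comp; [|exact: dA|exact: dphi].
  by rewrite /comp eA blkEX.
rewrite {1}(blk_sum w) linear_sum; apply: le_trans (L1_sum _ _ _) _.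
rewrite mulr_sumr ler_sum // => i _.
rewrite -key; apply: le_trans (jac_bnd _ _ _) _.
by rewrite ler_wpM2r ?L1_ge0 ?hb.
Qed.

End Blk.


Lemma dscal a b (s : R) (V : normedModType R) (G : V -> 'M[R]_(a,b)) x :
  differentiable G x ->
  differentiable (fun u => s *: G u) x /\ forall v, 'd (fun u => s *: G u) x v = s *: 'd G x v.
Proof.
apply: dlinc => t u v; rewrite scalerDr !scalerA mulrC //.
Qed.

Section Model.
Variables (S : finType) (k : nat) (n : 'I_k -> nat)
  (A : forall i : 'I_k, {ffun 'I_(n i) -> S} -> R)
  (p : nat -> nat) (q : nat -> 'I_k -> nat)
  (psi : forall (t : nat) (i : 'I_k), 'M[R]_(n i, p t) -> 'rV[R]_(q t i))
  (phi : forall t : nat, 'rV[R]_(\sum_(i < k) q t i) -> 'rV[R]_(p t.+1))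
  (alpha : nat -> R) (beta_ : nat -> 'I_k -> R).
Hypothesis n2 : forall i, (2 <= n i)%N.
Hypothesis hA0 : forall i z, 0 <= @A i z.
Hypothesis dpsi : forall t i (X : 'M[R]_(n i, p t)), differentiable (@psi t i) X.
Hypothesis hpsi : forall t i (X : 'M[R]_(n i, p t)) (j : 'I_(n i)),
     norm1 (jac (fun u : 'rV[R]_(p t) =>
                   @psi t i (\matrix_(a, b) if a == j then u 0 b else X a b))
                (row j X)) <= beta_ t i.
Hypothesis dphi : forall t (m : 'rV[R]_(\sum_(i < k) q t i)), differentiable (@phi t) m.
Hypothesis hphi : forall t (m : 'rV[R]_(\sum_(i < k) q t i)) (i : 'I_k),
     norm1 (jac (fun u : 'rV[R]_(q t i) =>
                   @phi t (\mxrow_(j < k) @dfwith _ (fun j0 : 'I_k => 'rV[R]_(q t j0)) (fun j0 => submxrow m j0) i u j))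
                (submxrow m i)) <= alpha t.

Lemma args_diff m0 d i (H : 'rV[R]_m0 -> S -> 'rV[R]_d) x0 (z : {ffun 'I_(n i) -> S}) :
  (forall s, differentiable (fun u => H u s) x0) ->
  differentiable (fun u => args (H u) z) x0 /\
  forall v (a : 'I_(n i)), row a ('d (fun u => args (H u) z) x0 v) = 'd (fun u => H u (z a)) x0 v.
Proof.
move=> hH.
have E : (fun u => args (H u) z) = fun u => \sum_(a < n i) rowE a (H u (z a)).
  apply: funext => u; apply/matrixP => a' b; rewrite summxE (bigD1 a') //= big1 => [|a /negbTE na].
    by rewrite !mxE eqxx addr0.
  by rewrite mxE eq_sym na.
rewrite E.
have [a|D1 D2] := @dsum _ _ _ (index_enum 'I_(n i)) predT (fun a u => rowE a (H u (z a))) x0.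
  exact: (dlinc (@rowE_lin _ _ a) (hH (z a))).1.
split; first exact: D1.
move=> v a; rewrite D2.
under eq_bigr do rewrite (dlinc (@rowE_lin _ _ _) (hH _)).2.
apply/matrixP => a' b; rewrite !mxE summxE (bigD1 a) //= big1 => [|a2 /negbTE na].
  by rewrite !mxE eqxx addr0 (ord1 a').
by rewrite mxE eq_sym na.
Qed.



Lemma beta0 t i : 0 <= beta_ t i.
Proof.
have h0 : (0 < n i)%N by apply: leq_trans (n2 i).
exact: le_trans (norm1_ge0 _) (hpsi 0 (Ordinal h0)).
Qed.

Lemma msg_diff t m0 (H : 'rV[R]_m0 -> S -> 'rV[R]_(p t)) x0 sig i (c : S -> R) :
  (forall s, differentiable (fun u => H u s) x0) ->
  (forall s v, L1 ('d (fun u => H u s) x0 v) <= c s * L1 v) ->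
  differentiable (fun u => message A psi (H u) sig i) x0 /\
  forall v, L1 ('d (fun u => message A psi (H u) sig i) x0 v) <=
     beta_ t i * (\sum_(z | first_is z sig) @A i z * \sum_(a < n i) c (z a)) * L1 v.
Proof.
move=> hH hc.
have dg : forall z : {ffun 'I_(n i) -> S},
   differentiable (fun u => @psi t i (args (H u) z)) x0 /\
   forall v, L1 ('d (fun u => @psi t i (args (H u) z)) x0 v) <=
      beta_ t i * (\sum_(a < n i) c (z a)) * L1 v.
  move=> z; have [G1 G2] := args_diff z hH.
  have -> : (fun u => @psi t i (args (H u) z)) = @psi t i \o (fun u => args (H u) z) by [].
  split; first exact: differentiable_comp G1 (dpsi _).
  move=> v; rewrite diff_comp; [|exact: G1|exact: dpsi].
  apply: le_trans (psi_bound (dpsi (i:=i)) (hpsi _) _) _.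
  rewrite -mulrA ler_wpM2l ?beta0 // L1_rows mulr_suml ler_sum // => a _.
  by rewrite G2 hc.
have E : (fun u => message A psi (H u) sig i) =
   fun u => \sum_(z | first_is z sig) @A i z *: @psi t i (args (H u) z) by [].
rewrite E.
have hz : forall z : {ffun 'I_(n i) -> S},
   differentiable (fun u => @A i z *: @psi t i (args (H u) z)) x0 /\
   forall v, 'd (fun u => @A i z *: @psi t i (args (H u) z)) x0 v =
      @A i z *: 'd (fun u => @psi t i (args (H u) z)) x0 v.
  by move=> z; apply: dscal; exact: (dg z).1.
have [z|D1 D2] := @dsum _ _ _ (index_enum {ffun 'I_(n i) -> S}) (fun z => first_is z sig) (fun z u => @A i z *: @psi t i (args (H u) z)) x0.
  exact: (hz z).1.
split; first exact: D1.
move=> v; rewrite D2; apply: le_trans (L1_sum _ _ _) _.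
rewrite mulr_sumr mulr_suml ler_sum // => z _.
rewrite (hz z).2 L1Z ger0_norm ?hA0 //.
rewrite [beta_ t i * _]mulrCA -mulrA ler_wpM2l ?hA0 //.
exact: (dg z).2.
Qed.


Lemma exch (sig : S) i (j : 'I_(n i)) (g : S -> R) :
  \sum_s \sum_(z : {ffun 'I_(n i) -> S} | first_is z sig && (z j == s)) @A i z * g s
  = \sum_(z : {ffun 'I_(n i) -> S} | first_is z sig) @A i z * g (z j).
Proof.
rewrite [RHS](partition_big (fun z : {ffun 'I_(n i) -> S} => z j) predT) //=.
apply: eq_bigr => s _; apply: eq_bigr => z /andP [_ /eqP ->] //.
Qed.

Lemma Atilde_c (sig : S) (c : S -> R) :
  \sum_s Atilde A sig s * c s =
  \sum_(i < k) \sum_(z : {ffun 'I_(n i) -> S} | first_is z sig)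
      @A i z * \sum_(j < n i | (0 < j)%N) c (z j).
Proof.
rewrite /Atilde.
under eq_bigr do rewrite mulr_suml.
rewrite exchange_big /=; apply: eq_bigr => i _.
under eq_bigr do rewrite mulr_suml.
rewrite exchange_big /=.
under eq_bigr do (under eq_bigr do rewrite mulr_suml).
under eq_bigr do rewrite exch.
rewrite exchange_big /=; apply: eq_bigr => z _.
by rewrite mulr_sumr.
Qed.

Lemma first0 i (z : {ffun 'I_(n i) -> S}) sig (a : 'I_(n i)) :
  first_is z sig -> nat_of_ord a = 0%N -> z a = sig.
Proof. by move=> /forallP /(_ a) /implyP H a0; apply/eqP; apply: H; rewrite a0. Qed.

Lemma comb (sig : S) (c : S -> R) : (forall s, 0 <= c s) ->
  \sum_(i < k) \sum_(z : {ffun 'I_(n i) -> S} | first_is z sig)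
      @A i z * \sum_(a < n i) c (z a)
  <= \sum_s Bmat A sig s * c s.
Proof.
move=> c0.
have split_a : forall i (z : {ffun 'I_(n i) -> S}), first_is z sig ->
   \sum_(a < n i) c (z a) = c sig + \sum_(a < n i | (0 < a)%N) c (z a).
  move=> i z fz.
  have h0 : (0 < n i)%N by apply: leq_trans (n2 i).
  rewrite (bigD1 (Ordinal h0)) //= (first0 fz) //; congr (_ + _).
  by apply: eq_bigl => a; rewrite -(inj_eq val_inj) /= lt0n.
have -> : \sum_(i < k) \sum_(z : {ffun 'I_(n i) -> S} | first_is z sig)
      @A i z * \sum_(a < n i) c (z a) =
   c sig * (\sum_(i < k) \sum_(z : {ffun 'I_(n i) -> S} | first_is z sig) @A i z)
   + \sum_s Atilde A sig s * c s.
  rewrite Atilde_c mulr_sumr -big_split; apply: eq_bigr => i _.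
  rewrite mulr_sumr -big_split; apply: eq_bigr => z fz.
  by rewrite split_a // mulrDr mulrC.
have -> : \sum_s Bmat A sig s * c s = gamma A * c sig + \sum_s Atilde A sig s * c s.
  rewrite /Bmat; under eq_bigr do rewrite mulrDl; rewrite big_split /=; congr (_ + _).
  rewrite (bigD1 sig) //= eqxx mul1r big1 ?addr0 // => s /negbTE ns.
  by rewrite eq_sym ns mul0r mul0r.
rewrite lerD2r mulrC ler_wpM2r //.
apply: le_trans (le_bigmax _ _ sig).
have := Atilde_c sig (fun _ => 1); under eq_bigr do rewrite mulr1; move=> ->.
apply: ler_sum => i _.
apply: ler_sum => z _; rewrite ler_peMr // (bigD1 (Ordinal (n2 i))) //=.
by rewrite lerDl sumr_ge0.
Qed.


Lemma blk_sub t (B : forall i : 'I_k, 'rV[R]_(q t i)) i :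
  submxrow (\sum_(j < k) @blkE k (q t) j (B j)) i = B i.
Proof.
rewrite submxrow_sum (bigD1 i) //= big1 => [|j nji].
  by rewrite /blkE mxdf_in addr0.
by rewrite /blkE mxdf_out // eq_sym.
Qed.

Lemma layer t m0 (H : 'rV[R]_m0 -> S -> 'rV[R]_(p t)) x0 (c : S -> R) sig :
  (forall s, differentiable (fun u => H u s) x0) ->
  (forall s, 0 <= c s) ->
  (forall s v, L1 ('d (fun u => H u s) x0 v) <= c s * L1 v) ->
  differentiable (fun u => @phi t (\mxrow_(i < k) message A psi (H u) sig i)) x0 /\
  forall v, L1 ('d (fun u => @phi t (\mxrow_(i < k) message A psi (H u) sig i)) x0 v)
     <= alpha t * (\big[Num.max/0]_(i < k) beta_ t i) * (\sum_s Bmat A sig s * c s) * L1 v.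
Proof.
move=> hH c0 hc.
have hm := fun i => @msg_diff t m0 H x0 sig i c hH hc.
have EM : (fun u => \mxrow_(i < k) message A psi (H u) sig i) =
   fun u => \sum_(i < k) @blkE k (q t) i (message A psi (H u) sig i).
  apply: funext => u; rewrite {1}(blk_sum (\mxrow_(i < k) message A psi (H u) sig i)).
  by apply: eq_bigr => i _; rewrite mxrowK.
have [i|M1 M2] := @dsum _ _ _ (index_enum 'I_k) predT
   (fun i u => @blkE k (q t) i (message A psi (H u) sig i)) x0.
  exact: (dlinc (@blkE_lin k (q t) i) (hm i).1).1.
have -> : (fun u => @phi t (\mxrow_(i < k) message A psi (H u) sig i)) =
   @phi t \o (fun u => \sum_(i < k) @blkE k (q t) i (message A psi (H u) sig i)).
  by rewrite -EM.
split; first exact: differentiable_comp M1 (dphi _).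
move=> v; rewrite diff_comp; [|exact: M1|exact: dphi].
apply: le_trans (phi_bound (dphi (t:=t)) (hphi _) _) _.
have Es : forall i, submxrow ('d (fun u => \sum_(i < k) @blkE k (q t) i (message A psi (H u) sig i)) x0 v) i
    = 'd (fun u => message A psi (H u) sig i) x0 v.
  move=> i; rewrite M2.
  under eq_bigr do rewrite (dlinc (@blkE_lin k (q t) _) (hm _).1).2.
  exact: blk_sub.
under eq_bigr do rewrite Es.
set bet := \big[Num.max/0]_(i < k) beta_ t i.
have hb : forall i, beta_ t i <= bet by move=> i; exact: le_bigmax.
have bet0 : 0 <= bet by exact: bigmax_ge_id.
have S1 : \sum_(i < k) L1 ('d (fun u => message A psi (H u) sig i) x0 v) <=
   bet * (\sum_(i < k) \sum_(z : {ffun 'I_(n i) -> S} | first_is z sig)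
      @A i z * \sum_(a < n i) c (z a)) * L1 v.
  rewrite [bet * _]mulr_sumr mulr_suml ler_sum // => i _.
  apply: le_trans ((hm i).2 v) _.
  rewrite ler_wpM2r ?L1_ge0 // ler_wpM2r ?hb //.
  by apply: sumr_ge0 => z _; rewrite mulr_ge0 ?hA0 // sumr_ge0.
have S2 := comb sig c0.
case: (boolP (0 <= alpha t)) => ha.
  rewrite -!mulrA ler_wpM2l //; apply: le_trans S1 _.
  by rewrite -mulrA ler_wpM2l // ler_wpM2r ?L1_ge0.
have no : forall i : 'I_k, False.
  move=> i; move/negP: ha; apply; exact: le_trans (norm1_ge0 _) (hphi 0 i).
have -> : bet = 0 by rewrite /bet; elim/big_rec: _ => // i x _ _; case: (no i).
rewrite big1 => [|i]; last by case: (no i).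
by rewrite !mulr0 !mul0r.
Qed.



Lemma ab0 t : 0 <= alpha t * \big[Num.max/0]_(i < k) beta_ t i.
Proof.
case: (boolP (0 <= alpha t)) => ha.
  by rewrite mulr_ge0 // bigmax_ge_id.
have no : forall i : 'I_k, False.
  move=> i; move/negP: ha; apply; exact: le_trans (norm1_ge0 _) (hphi 0 i).
have -> : \big[Num.max/0]_(i < k) beta_ t i = 0.
  by elim/big_rec: _ => // i x _ _; case: (no i).
by rewrite mulr0.
Qed.

Lemma gamma0 : 0 <= gamma A.
Proof. exact: bigmax_ge_id. Qed.

Lemma Atilde0 s u : 0 <= Atilde A s u.
Proof.
apply: sumr_ge0 => i _; apply: sumr_ge0 => j _; apply: sumr_ge0 => z _; exact: hA0.
Qed.

Lemma Bmat0 s u : 0 <= Bmat A s u.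
Proof. by rewrite /Bmat addr_ge0 ?Atilde0 // mulr_ge0 ?gamma0. Qed.

Lemma main (sigma tau : S) (x : S -> 'rV[R]_(p 0)) :
  norm1 (jac (fun u : 'rV[R]_(p 0) =>
                  feat A psi phi 2 (fun r => if r == tau then u else x r) sigma)
               (x tau))
    <= 1 / 3 * (\prod_(l < 2) (alpha l * \big[Num.max/0]_(i < k) beta_ l i))
         * (EFC (weight (Bmat A)) tau sigma + w_out (weight (Bmat A)) tau
            + w_in (weight (Bmat A)) sigma - 4).
Proof.
set bet := fun l => \big[Num.max/0]_(i < k) beta_ l i.
pose H0 := fun (u : 'rV[R]_(p 0)) (r : S) => if r == tau then u else x r.
pose c0 := fun s : S => ((s == tau)%:R : R).
have d0 : forall s, differentiable (fun u => H0 u s) (x tau) /\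
     forall v, L1 ('d (fun u => H0 u s) (x tau) v) <= c0 s * L1 v.
  move=> s; rewrite /H0 /c0; case: (eqVneq s tau) => [e|ne].
    subst s.
    have [D E] := dlin (x tau) (fun (a : R) (u v : 'rV[R]_(p 0)) => erefl (a *: u + v)).
    split; first exact: D.
    by move=> v; rewrite E mul1r.
  have -> : (fun=> x s) = cst (x s) :> ('rV[R]_(p 0) -> 'rV[R]_(p 0)) by [].
  split; first exact: differentiable_cst.
  move=> v; rewrite (diff_cst (x s) (x tau)) mul0r.
  by rewrite /L1 big1 // => i _; rewrite big1 // => j _; rewrite mxE normr0.
have L0 := fun rho => @layer 0 (p 0) H0 (x tau) c0 rho (fun s => (d0 s).1)
   (fun s => ler0n _ _) (fun s => (d0 s).2).
have sc0 : forall rho, \sum_s Bmat A rho s * c0 s = Bmat A rho tau.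
  move=> rho; rewrite (bigD1 tau) //= /c0 eqxx mulr1 big1 ?addr0 // => s /negbTE ->.
  by rewrite mulr0.
pose H1 := fun (u : 'rV[R]_(p 0)) (r : S) => feat A psi phi 1 (H0 u) r.
pose c1 := fun r : S => alpha 0 * bet 0 * Bmat A r tau.
have hc1 : forall s v, L1 ('d (fun u => H1 u s) (x tau) v) <= c1 s * L1 v.
  by move=> s v; have := (L0 s).2 v; rewrite sc0.
have L1' := @layer 1 (p 0) H1 (x tau) c1 sigma (fun s => (L0 s).1)
   (fun s => mulr_ge0 (ab0 0) (Bmat0 _ _)) hc1.
set K0 := alpha 0 * bet 0.
set K1 := alpha 1 * bet 1.
have K00 : 0 <= K0 := ab0 0.
have K10 : 0 <= K1 := ab0 1.
set T := \sum_s Bmat A s tau * Bmat A sigma s.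
have C0 : 0 <= K1 * (\sum_s Bmat A sigma s * c1 s).
  by apply: mulr_ge0 => //; apply: sumr_ge0 => s _; rewrite mulr_ge0 ?Bmat0 // /c1 mulr_ge0 ?Bmat0.
have key : norm1 (jac (fun u : 'rV_(p 0) =>
        feat A psi phi 2 (fun r : S => if r == tau then u else x r) sigma) (x tau))
     <= K1 * (\sum_s Bmat A sigma s * c1 s) := norm1_le C0 L1'.2.
apply: le_trans key _.
have ES : \sum_s Bmat A sigma s * c1 s = K0 * T.
  rewrite /T mulr_sumr; apply: eq_bigr => s _; rewrite /c1 -/K0.
  by rewrite mulrCA [X in K0 * X]mulrC.
have wE : forall u s, weight (Bmat A) u s = Bmat A s u.
  move=> u s; rewrite /weight; case: ifP => // /negbT; rewrite -leNgt => h.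
  by apply/eqP; rewrite eq_le h Bmat0.
have w0 : forall u s, 0 <= weight (Bmat A) u s by move=> u s; rewrite wE Bmat0.
have EE : EFC (weight (Bmat A)) tau sigma + w_out (weight (Bmat A)) tau
     + w_in (weight (Bmat A)) sigma - 4
   = 3 * w_T (weight (Bmat A)) tau sigma + 2 * w_F (weight (Bmat A)) tau sigma.
  by rewrite /EFC; ring.
have TE : w_T (weight (Bmat A)) tau sigma = T.
  by rewrite /w_T /T; apply: eq_bigr => s _; rewrite !wE.
have F0 : 0 <= w_F (weight (Bmat A)) tau sigma.
  by apply: sumr_ge0 => a _; apply: sumr_ge0 => b _; rewrite !mulr_ge0.
rewrite EE TE ES.
have -> : \prod_(l < 2) (alpha l * \big[Num.max/0]_(i < k) beta_ l i) = K0 * K1.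
  by rewrite !big_ord_recr big_ord0 /= mul1r.
set F := w_F _ _ _.
have -> : 1 / 3 * (K0 * K1) * (3 * T + 2 * F) = K1 * (K0 * T) + 2 / 3 * (K0 * K1 * F).
  by field.
rewrite lerDl; apply: mulr_ge0; first exact: divr_ge0 (ler0n _ 2) (ler0n _ 3).
exact: mulr_ge0 (mulr_ge0 K00 K10) F0.
Qed.

End Model.

End H.


Theorem proposition1 (R : realType) (S : finType) (k : nat) (n : 'I_k -> nat)
  (Rel : forall i : 'I_k, {set {ffun 'I_(n i) -> S}})
  (A : forall i : 'I_k, {ffun 'I_(n i) -> S} -> R)
  (p : nat -> nat) (q : nat -> 'I_k -> nat)
  (psi : forall (t : nat) (i : 'I_k), 'M[R]_(n i, p t) -> 'rV[R]_(q t i))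
  (phi : forall t : nat, 'rV[R]_(\sum_(i < k) q t i) -> 'rV[R]_(p t.+1))
  (alpha : nat -> R) (beta_ : nat -> 'I_k -> R) :
  (forall i, (2 <= n i)%N) ->
  (forall i z, 0 <= A i z) ->
  (forall i z, z \notin Rel i -> A i z = 0) ->
  (* bounded Jacobians: message functions *)
  (forall t i (X : 'M[R]_(n i, p t)), differentiable (psi t i) X) ->
  (forall t i (X : 'M[R]_(n i, p t)) (j : 'I_(n i)),
     norm1 (jac (fun u : 'rV[R]_(p t) =>
                   psi t i (\matrix_(a, b) if a == j then u 0 b else X a b))
                (row j X)) <= beta_ t i) ->
  (* bounded Jacobians: update functions *)
  (forall t (m : 'rV[R]_(\sum_(i < k) q t i)), differentiable (phi t) m) ->
  (forall t (m : 'rV[R]_(\sum_(i < k) q t i)) (i : 'I_k),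
     norm1 (jac (fun u : 'rV[R]_(q t i) =>
                   phi t (\mxrow_(j < k) @dfwith _ (fun j0 : 'I_k => 'rV[R]_(q t j0)) (fun j0 => submxrow m j0) i u j))
                (submxrow m i)) <= alpha t) ->
  let beta := fun l => \big[Num.max/0]_(i < k) beta_ l i in
  let w := weight (Bmat A) in
  forall (sigma tau : S), is_edge (Bmat A) tau sigma ->
  forall x : S -> 'rV[R]_(p 0),
    norm1 (jac (fun u : 'rV[R]_(p 0) =>
                  feat A psi phi 2 (fun r => if r == tau then u else x r) sigma)
               (x tau))
    <= 1 / 3 * (\prod_(l < 2) (alpha l * beta l))
         * (EFC w tau sigma + w_out w tau + w_in w sigma - 4).
Proof.
move=> n2 hA0 _ dpsi hpsi dphi hphi beta w sigma tau _ x.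
exact: (main n2 hA0 dpsi hpsi dphi hphi sigma tau x).
Qed.
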